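(* Let $M\in\mathbb{R}^{m\times n}$ with $m\le n$ and $\operatorname{rank}(M)=r$. Let $\{p_i\}_{i=1}^n$ be a probability distribution on $[n]$ with $p_i>0$ for all $i$, and let $p_{\min}=\min_{i\in[n]}p_i$. Let $\delta\in(0,1)$. Suppose that Algorithm MC-NUS (described in the context) is run on $M$ with target rank $r$, $d$ sampled columns, sampling distribution $\{p_i\}$, and $s$ sampled entries per remaining column, where $$d\ \ge\ \frac{7\mu(r)\,r\ln(2r/\delta)}{n\,p_{\min}},\qquad s\ \ge\ 7\mu(r)\,r\ln(2rn/\delta).$$ Then with probability at least $1-\delta$ (over the random sampling of the algorithm), the output satisfies $\hat M=M$, i.e. the algorithm recovers $M$ exactly.
   Context: Notation: for a matrix $B$, $B_{(i)}$ is its $i$-th row and $B^{(j)}$ its $j$-th column; for a (multi)set $\mathcal{O}$ of row indices, $\mathbf{x}_{\mathcal{O}}$ is the vector of entries of $\mathbf{x}$ indexed by $\mathcal{O}$ and $B_{\mathcal{O}}$ is the matrix of rows of $B$ indexed by $\mathcal{O}$ (with repetitions if $\mathcal{O}$ has repeated indices). Write $M=[\mathbf{m}_1,\dots,\mathbf{m}_n]$. Algorithm MC-NUS (inputs: target rank $r>0$, integers $d\ge r$, $s>0$, distribution $\{p_i\}_{i=1}^n$ with $p_i>0$): (1) For $j=1,\dots,d$, independently sample $i_j\in[n]$ with $\Pr[i_j=i]=p_i$; set $\hat{\mathbf{m}}_{i_j}=\mathbf{m}_{i_j}$ (these columns are fully observed) and $A^{(j)}=\mathbf{m}_{i_j}/\sqrt{d\,p_{i_j}}$,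 giving $A\in\mathbb{R}^{m\times d}$. (2) Set $\hat r=\min(r,\operatorname{rank}(A))$ and let $\hat U\in\mathbb{R}^{m\times\hat r}$ consist of the top-$\hat r$ left singular vectors of $A$. (3) For each remaining column $\mathbf{m}_i$ (not among the sampled ones), sample a multiset $\mathcal{O}_i$ of $s$ indices uniformly at random from $[m]$ with replacement, observe $\mathbf{m}_{i,\mathcal{O}_i}$, and set $\hat{\mathbf{m}}_i=\hat U(\hat U_{\mathcal{O}_i}^T\hat U_{\mathcal{O}_i})^{-1}\hat U_{\mathcal{O}_i}^T\mathbf{m}_{i,\mathcal{O}_i}$. Output $\hat M=[\hat{\mathbf{m}}_1,\dots,\hat{\mathbf{m}}_n]$. Incoherence: let $\bar U\in\mathbb{R}^{m\times r}$, $\bar V\in\mathbb{R}^{n\times r}$ be the matrices of top-$r$ left and right singular vectors of $M$; $\mu(r)=\max\left(\max_{i\in[m]}\frac{m}{r}\|\bar U_{(i)}\|_2^2,\ \max_{i\in[n]}\frac{n}{r}\|\bar V_{(i)}\|_2^2\right)$. *)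

(* Defs.v *)
From HB Require Import structures.
From mathcomp Require Import all_boot all_order all_algebra.
From mathcomp Require Import all_classical all_reals all_analysis.
Set Implicit Arguments. Unset Strict Implicit. Unset Printing Implicit Defensive.
Import Order.TTheory GRing.Theory Num.Theory.
Local Open Scope ring_scope.

Section Defs.
Variable R : realType.

(* U (m x k) consists of top-k left singular vectors of A (m x d):
   orthonormal columns, eigenvectors of A A^T (left singular vectors) with
   eigenvalues lam (= squared singular values) in nonincreasing order, and
   these are the top k: every vector orthogonal to the columns of U has
   Rayleigh quotient for A A^T at most each lam a. *)
Definition top_left_sv (m d k : nat) (A : 'M[R]_(m, d)) (U : 'M[R]_(m, k)) : Prop :=
  U^T *m U = 1%:M /\
  exists lam : 'I_k -> R,
    (forall a b : 'I_k, (a <= b)%N -> lam b <= lam a) /\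
    A *m A^T *m U = U *m diag_mx (\row_a lam a) /\
    (forall x : 'cV[R]_m, U^T *m x = 0 ->
       forall a : 'I_k, (x^T *m (A *m A^T) *m x) 0 0 <= lam a * (x^T *m x) 0 0).

Definition rownorm2 (m k : nat) (U : 'M[R]_(m, k)) (i : 'I_m) : R :=
  \sum_(l < k) U i l ^+ 2.

Definition incoherence (m n r : nat) (Ub : 'M[R]_(m, r)) (Vb : 'M[R]_(n, r)) : R :=
  Num.max (\big[Num.max/0]_(i < m) (m%:R / r%:R * rownorm2 Ub i))
          (\big[Num.max/0]_(j < n) (n%:R / r%:R * rownorm2 Vb j)).

(* p_min = min_i p_i (p is a probability vector, so all p_i <= 1) *)
Definition pmin (n : nat) (p : 'I_n -> R) : R := \big[Num.min/1]_(i < n) p i.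

(* Sample space of MC-NUS: the d column indices i_1..i_d, and for every
   column i a sequence O_i of s row indices (only used for the remaining,
   non-sampled columns; sampling it for all columns does not change the
   distribution of the algorithm's run). *)
Definition outcome (m n d s : nat) : finType :=
  ({ffun 'I_d -> 'I_n} * {ffun 'I_n -> {ffun 'I_s -> 'I_m}})%type.

Definition weight (m n d s : nat) (p : 'I_n -> R) (w : outcome m n d s) : R :=
  (\prod_(j < d) p (w.1 j)) * (m%:R^-1) ^+ (n * s).

Definition Prob (m n d s : nat) (p : 'I_n -> R) (E : outcome m n d s -> Prop) : R :=
  \sum_(w : outcome m n d s) (if `[< E w >] then weight p w else 0).

Definition sampledA (m n d : nat) (M : 'M[R]_(m, n)) (p : 'I_n -> R)
  (idx : 'I_d -> 'I_n) : 'M[R]_(m, d) :=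
  \matrix_(a < m, j < d) (M a (idx j) / Num.sqrt (d%:R * p (idx j))).

Definition rows_sel (m k s : nat) (U : 'M[R]_(m, k)) (O : 'I_s -> 'I_m) : 'M[R]_(s, k) :=
  \matrix_(t < s, l < k) U (O t) l.

Definition estimate (m n k s : nat) (M : 'M[R]_(m, n)) (U : 'M[R]_(m, k))
  (O : 'I_s -> 'I_m) (i : 'I_n) : 'cV[R]_m :=
  let UO := rows_sel U O in
  U *m invmx (UO^T *m UO) *m UO^T *m (\col_(t < s) M (O t) i).

(* Exact recovery event for outcome w: for every admissible choice of U-hat
   (top-rhat left singular vectors of A, rhat = min(r, rank A)), every
   remaining column i has U_O^T U_O invertible and its estimate equals m_i.
   (Sampled columns are copied exactly, so they are always recovered.) *)
Definition mcnus_recovers (m n d s r : nat) (M : 'M[R]_(m, n)) (p : 'I_n -> R)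
  (w : outcome m n d s) : Prop :=
  let A := sampledA M p (fun j => w.1 j) in
  forall U : 'M[R]_(m, minn r (\rank A)),
    top_left_sv A U ->
    forall i : 'I_n, (forall j : 'I_d, w.1 j != i) ->
      let UO := rows_sel U (fun t => w.2 i t) in
      (UO^T *m UO) \in unitmx /\ estimate M U (fun t => w.2 i t) i = col i M.

End Defs.

(* Main.v *)
Require Import Defs.
From HB Require Import structures.
From mathcomp Require Import all_boot all_order all_algebra.
From mathcomp Require Import all_classical all_reals all_analysis.
From mathcomp Require Import lra zify ring.
Import Order.TTheory GRing.Theory Num.Theory.
Local Open Scope ring_scope.
Set Implicit Arguments. Unset Strict Implicit. Unset Printing Implicit Defensive.
Section LA.
Variable R : realType.

Lemma sqnorm_ge0 k (w : 'rV[R]_k) : 0 <= (w *m w^T) 0 0.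
Proof. rewrite mxE; apply: sumr_ge0 => l _; rewrite mxE -expr2 sqr_ge0 //. Qed.



Lemma sqnorm_eq0 k (w : 'rV[R]_k) : (w *m w^T) 0 0 = 0 -> w = 0.
Proof.
rewrite mxE => H; apply/rowP => l; rewrite mxE.
have H2 : w 0 l * w^T l 0 = 0.
  by apply: (psumr_eq0P _ H) => // i _; rewrite mxE -expr2 sqr_ge0.
move: H2; rewrite mxE -expr2 => /eqP; rewrite sqrf_eq0 => /eqP //.
Qed.

Lemma gram_unit s k (X : 'M[R]_(s,k)) : \rank X = k -> X^T *m X \in unitmx.
Proof.
move=> rX; rewrite -row_free_unit -kermx_eq0.
apply/eqP/row_matrixP => i; rewrite row0.
set v := row i (kermx _).
have hv : v *m (X^T *m X) = 0 by rewrite /v -row_mul mulmx_ker row0.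
have h1 : (v *m X^T) *m (v *m X^T)^T = 0.
  by rewrite trmx_mul trmxK !mulmxA -(mulmxA v) hv mul0mx.
have h2 : v *m X^T = 0 by apply: sqnorm_eq0; rewrite h1 mxE.
have /row_fullP [B hB] : row_full X by rewrite /row_full rX.
apply: trmx_inj; rewrite trmx0 -[v^T]mul1mx -hB -mulmxA -(trmxK X) -trmx_mul h2.
by rewrite trmx0 mulmx0.
Qed.

Lemma unit_gram_rank s k (X : 'M[R]_(s,k)) : X^T *m X \in unitmx -> \rank X = k.
Proof.
move=> /mxrank_unit h; apply/eqP; rewrite eqn_leq rank_leq_col /=.
by rewrite -{1}h mxrankM_maxr.
Qed.

End LA.
Section LA2.
Variable R : realType.

Lemma rank_orth m k (U : 'M[R]_(m,k)) : U^T *m U = 1%:M -> \rank U = k.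
Proof. by move=> h; apply: unit_gram_rank; rewrite h unitmx1. Qed.

Lemma colspace m d' k (A : 'M[R]_(m,d')) (U : 'M[R]_(m,k)) :
  top_left_sv A U -> k = \rank A -> (U^T :=: A^T)%MS.
Proof.
case=> hUU [lam [_ [hE hR]]] hk.
have rU : \rank U^T = k by rewrite mxrank_tr rank_orth.
have rA : \rank A^T = k by rewrite mxrank_tr hk.
have [Hall | Hex] := boolP [forall a, lam a != 0].
  have hU : U = A *m (A^T *m U *m diag_mx (\row_a (lam a)^-1)).
    rewrite !mulmxA hE; apply/matrixP => i j.
    rewrite !mul_mx_diag !mxE mulfK //; exact: (forallP Hall).
  have sub : (U^T <= A^T)%MS by rewrite hU trmx_mul submxMl.
  apply/eqmxP; rewrite -(mxrank_leqif_eq sub).2 rU rA //.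
move/forallPn: Hex => [a /negPn /eqP ha].
have sub : (A^T <= U^T)%MS.
  rewrite submxE; set K := cokermx U^T.
  have hK : U^T *m K = 0 := mulmx_coker _.
  have hcol : forall j, A^T *m col j K = 0.
    move=> j; set x := col j K.
    have hx : U^T *m x = 0 by rewrite /x colE mulmxA hK mul0mx.
    have := hR x hx a; rewrite ha mul0r.
    have -> : x^T *m (A *m A^T) *m x = (x^T *m A) *m (x^T *m A)^T.
      by rewrite trmx_mul trmxK !mulmxA.
    move=> hle.
    have h0 : (x^T *m A) *m (x^T *m A)^T = (0 : 'M[R]_1).
      apply/matrixP => i i'; rewrite !ord1 [in RHS]mxE.
      by apply/eqP; rewrite eq_le hle sqnorm_ge0.
    have h1 : x^T *m A = 0 by apply: sqnorm_eq0; rewrite h0 mxE.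
    by rewrite -[A^T *m x]trmxK trmx_mul trmxK h1 trmx0.
  apply/eqP/matrixP => i j; have := congr1 (fun X : 'M[R]_(d',1) => X i 0) (hcol j).
  by rewrite colE mulmxA -colE !mxE.
apply/eqmx_sym/eqmxP; rewrite -(mxrank_leqif_eq sub).2 rU rA //.
Qed.

End LA2.
Section LA3.
Variable R : realType.

Lemma tr11 (X : 'M[R]_1) : X 0 0 = \tr X.
Proof. by rewrite /mxtrace big_ord1. Qed.

Lemma proj_bound N r (v : 'I_N -> 'rV[R]_r) (W : 'M[R]_r) :
  \sum_i (v i)^T *m v i = 1%:M ->
  \sum_(i | (v i <= W)%MS) ((v i) *m (v i)^T) 0 0 <= (\rank W)%:R.
Proof.
move=> hsum; set k := \rank W.
have rB : \rank (row_base W) = k by rewrite eq_row_base.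
have hWB : forall u : 'rV[R]_r, (u <= W)%MS -> exists c, u = c *m row_base W.
  by move=> u; rewrite -(eq_row_base W) => /submxP.
move: (row_base W) rB hWB => B rB hWB.
set G := B *m B^T.
have GU : G \in unitmx by rewrite /G -{1}(trmxK B); apply: gram_unit; rewrite mxrank_tr rB.
have GT : G^T = G by rewrite /G trmx_mul trmxK.
set P := B^T *m invmx G *m B.
have PP : P *m P^T = P.
  rewrite /P !trmx_mul trmxK trmx_inv GT !mulmxA.
  by rewrite -(mulmxA _ B) -/G -(mulmxA (B^T *m invmx G) G) mulmxV // mulmx1.
have hW : forall u : 'rV[R]_r, (u <= W)%MS -> u *m P = u.
  move=> u /hWB [c ->].
  rewrite /P !mulmxA -(mulmxA c B) -/G -(mulmxA _ G) mulmxV // mulmx1 //.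
have Ptr : \tr P = k%:R.
  by rewrite /P mxtrace_mulC mulmxA -/G mulmxV // mxtrace1.
clearbody P.
have hq : forall u : 'rV[R]_r, u *m P *m u^T = (u *m P) *m (u *m P)^T.
  by move=> u; rewrite [(u *m P)^T]trmx_mul mulmxA -(mulmxA u P P^T) PP.
apply: (le_trans (y := \sum_i ((v i) *m P *m (v i)^T) 0 0)).
  rewrite [X in _ <= X](bigID (fun i => (v i <= W)%MS)) /=.
  rewrite -[X in X <= _]addr0; apply: lerD.
    by apply: ler_sum => i hi; rewrite hW.
  by apply: sumr_ge0 => i _; rewrite hq sqnorm_ge0.
under eq_bigr => i _ do rewrite tr11 mxtrace_mulC mulmxA mxtrace_mulC.
rewrite -raddf_sum -mulmx_sumr hsum mulmx1; by change (\tr P <= k%:R); rewrite Ptr.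
Qed.

End LA3.
Section LA4.
Variable R : realType.

Lemma sqsum_total N r (v : 'I_N -> 'rV[R]_r) :
  \sum_i (v i)^T *m v i = 1%:M -> \sum_i ((v i) *m (v i)^T) 0 0 = r%:R.
Proof.
move=> hsum; under eq_bigr => i _ do rewrite tr11 mxtrace_mulC.
rewrite -raddf_sum hsum /=. exact: mxtrace1.
Qed.

Lemma escape N r (v : 'I_N -> 'rV[R]_r) (P : 'I_N -> R) (q : R) :
  \sum_i (v i)^T *m v i = 1%:M -> 0 <= q ->
  (forall i, q * ((v i) *m (v i)^T) 0 0 <= P i) ->
  forall W : 'M[R]_r, (r - \rank W)%:R * q <= \sum_(i | ~~ (v i <= W)%MS) P i.
Proof.
move=> hsum q0 hP W.
have tot := sqsum_total hsum.
have pb := proj_bound W hsum.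
rewrite (bigID (fun i => (v i <= W)%MS)) /= in tot.
apply: (le_trans (y := q * \sum_(i | ~~ (v i <= W)%MS) ((v i) *m (v i)^T) 0 0)).
  rewrite mulrC ler_wpM2l // natrB ?rank_leq_col //; lra.
rewrite mulr_sumr; exact: ler_sum.
Qed.
End LA4.
Section PR1.
Variable R : realType.

Definition fcons (T : finType) d (t : T) (g : {ffun 'I_d -> T}) : {ffun 'I_d.+1 -> T} :=
  [ffun j => if unlift ord0 j is Some j' then g j' else t].

Lemma fcons0 (T : finType) d t (g : {ffun 'I_d -> T}) : fcons t g ord0 = t.
Proof. by rewrite ffunE unlift_none. Qed.

Lemma fconsS (T : finType) d t (g : {ffun 'I_d -> T}) j : fcons t g (lift ord0 j) = g j.
Proof. by rewrite ffunE liftK. Qed.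

Lemma sum_ffunS (T : finType) d (F : {ffun 'I_d.+1 -> T} -> R) :
  \sum_f F f = \sum_(t : T) \sum_(g : {ffun 'I_d -> T}) F (fcons t g).
Proof.
rewrite pair_big /=.
rewrite (reindex (fun x : T * {ffun 'I_d -> T} => fcons x.1 x.2)) //.
apply: onW_bij.
exists (fun f : {ffun 'I_d.+1 -> T} => (f ord0, [ffun j => f (lift ord0 j)])).
  by case=> t g /=; rewrite fcons0; congr pair; apply/ffunP => j; rewrite ffunE fconsS.
move=> f /=; apply/ffunP => j; rewrite ffunE.
by case: unliftP => [j' ->|->]; rewrite ?ffunE.
Qed.

Lemma cover N r (P : 'I_N -> R) (v : 'I_N -> 'rV[R]_r) (q : R) :
  (forall i, 0 <= P i) -> \sum_i P i = 1 -> 0 <= q -> q <= 1 ->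
  (forall W : 'M[R]_r, (\rank W < r)%N ->
     (r - \rank W)%:R * q <= \sum_(i | ~~ (v i <= W)%MS) P i) ->
  forall d (W : 'M[R]_r),
  \sum_(f : {ffun 'I_d -> 'I_N})
     (\prod_j P (f j)) * (if (\rank (W + \sum_(j < d) <<v (f j)>>)%MS < r)%N then 1 else 0)
   <= (r - \rank W)%:R * (1 - q) ^+ d.
Proof.
move=> P0 P1 q0 q1 hesc d; elim: d => [|d IH] W.
  rewrite expr0 mulr1.
  apply: (le_trans (y := \sum_(f : {ffun 'I_0 -> 'I_N}) (r - \rank W)%:R)).
    apply: ler_sum => f _; rewrite big_ord0 mul1r big_ord0 addsmx0_id.
    case: ifP => h; last by rewrite ler0n.
    by rewrite ler1n subn_gt0.
  by rewrite sumr_const card_ffun !card_ord expn0.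
rewrite sum_ffunS.
set c := (1 - q) ^+ d.
have c0 : 0 <= c by rewrite /c exprn_ge0 // subr_ge0.
set k := (r - \rank W)%N.
have step : forall t, \sum_(g : {ffun 'I_d -> 'I_N})
     (\prod_j P (fcons t g j)) *
     (if (\rank (W + \sum_(j < d.+1) <<v (fcons t g j)>>)%MS < r)%N then 1 else 0)
   <= P t * (r - \rank (W + <<v t>>)%MS)%:R * c.
  move=> t.
  under eq_bigr => g _ do rewrite big_ord_recl big_ord_recl fcons0 addsmxA -mulrA.
  under eq_bigr => g _ do rewrite (eq_bigr (fun i => P (g i)) (fun i _ => congr1 P (fconsS t g i))) (eq_bigr (fun i => <<v (g i)>>%MS) (fun i _ => congr1 (fun x => <<v x>>%MS) (fconsS t g i))).
  rewrite -mulr_sumr -mulrA; apply: ler_wpM2l => //.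
apply: (le_trans (ler_sum _ (fun t _ => step t))).
have rWt : forall t, (\rank W <= \rank (W + <<v t>>)%MS)%N.
  by move=> t; apply: mxrankS; exact: addsmxSl.
have [hW|hW] := ltnP (\rank W) r; last first.
  have -> : k = 0%N by apply/eqP; rewrite subn_eq0.
  rewrite mul0r big1 ?lexx // => t _.
  have -> : (r - \rank (W + <<v t>>)%MS)%N = 0%N.
    by apply/eqP; rewrite subn_eq0 (leq_trans hW (rWt t)).
  by rewrite mulr0 mul0r.
have bnd : forall t, P t * (r - \rank (W + <<v t>>)%MS)%:R * c <=
    P t * k%:R * c - (if ~~ (v t <= W)%MS then P t else 0) * c.
  move=> t; have h3 : 0 <= P t * c by rewrite mulr_ge0.
  case: ifP => hv.
    have hlt : (\rank W < \rank (W + <<v t>>)%MS)%N.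
      have hle := mxrank_leqif_eq (addsmxSl W <<v t>>%MS).
      rewrite ltn_neqAle hle.1 andbT hle.2.
      apply: contraNN hv => /andP [_ h].
      by move: h; rewrite addsmx_sub genmxE => /andP [].
    have hx' : ((r - \rank (W + <<v t>>)%MS) + 1 <= k)%N.
      rewrite /k; move: hlt hW (rank_leq_col (W + <<v t>>)%MS); lia.
    have hx : (r - \rank (W + <<v t>>)%MS)%:R + 1 <= k%:R :> R.
      by rewrite -(natrD R _ 1) ler_nat.
    nra.
  have hx : (r - \rank (W + <<v t>>)%MS)%:R <= k%:R :> R.
    by rewrite ler_nat /k leq_sub2l.
  nra.
apply: (le_trans (ler_sum _ (fun t _ => bnd t))).
rewrite sumrB -!mulr_suml P1 -big_mkcond /= exprS.
have he := hesc W hW.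
rewrite -/c; nra.
Qed.


End PR1.
Section RC.
Variable R : realType.

Lemma recoverA m n r d (M : 'M[R]_(m,n)) (p : 'I_n -> R) (Vb : 'M[R]_(n,r))
  (idx : 'I_d -> 'I_n) :
  \rank M = r -> (forall i, 0 < p i) -> top_left_sv M^T Vb ->
  (r <= \rank (\sum_(j < d) <<row (idx j) Vb>>)%MS)%N ->
  \rank (sampledA M p idx) = r /\ (M^T <= (sampledA M p idx)^T)%MS.
Proof.
move=> hrM hp hV G1.
have e1 : r = \rank M^T by rewrite mxrank_tr hrM.
have hVM := colspace hV e1.
rewrite trmxK in hVM.
have /submxP [C hC] : (M <= Vb^T)%MS by rewrite hVM.
set A := sampledA M p idx.
set X := \matrix_(l < r, j < d) (Vb (idx j) l / Num.sqrt (d%:R * p (idx j))).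
have hA : A = C *m X.
  apply/matrixP => a j; rewrite /A /X !mxE hC mxE mulr_suml.
  by apply: eq_bigr => l _; rewrite !mxE mulrA.
have rX : (r <= \rank X)%N.
  apply: (leq_trans G1); rewrite -(mxrank_tr X); apply: mxrankS.
  apply/sumsmx_subP => j _; rewrite genmxE.
  have sj : Num.sqrt (d%:R * p (idx j)) != 0.
    rewrite gt_eqF // sqrtr_gt0 mulr_gt0 // ltr0n; exact: (leq_ltn_trans (leq0n j) (ltn_ord j)).
  have -> : row (idx j) Vb = Num.sqrt (d%:R * p (idx j)) *: row j X^T.
    by apply/rowP => l; rewrite !mxE mulrC divfK.
  by rewrite scalemx_sub // row_sub.
have rC : \rank C = r.
  apply/eqP; rewrite eqn_leq rank_leq_col /= -{1}hrM hC; exact: mxrankM_maxl.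
have /row_fullP [B hB] : row_full C by rewrite /row_full rC.
have rA : \rank A = r.
  apply/eqP; rewrite eqn_leq; apply/andP; split.
    by rewrite hA -{2}rC mxrankM_maxl.
  apply: (leq_trans rX); have -> : X = B *m A by rewrite hA mulmxA hB mul1mx.
  exact: mxrankM_maxr.
split=> //.
have /row_freeP [B' hB'] : row_free X.
  by rewrite /row_free; apply/eqP/anti_leq; rewrite rX rank_leq_row.
have -> : M = A *m (B' *m Vb^T) by rewrite hC hA -mulmxA (mulmxA X) hB' mul1mx.
by rewrite trmx_mul submxMl.
Qed.

End RC.
Section RC2.
Variable R : realType.

Lemma recoverB m n r d s (M : 'M[R]_(m,n)) (Ub : 'M[R]_(m,r)) (A : 'M[R]_(m,d))
  k (U : 'M[R]_(m,k)) (O : 'I_s -> 'I_m) (i : 'I_n) :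
  \rank M = r -> top_left_sv M Ub -> \rank A = r -> (M^T <= A^T)%MS ->
  k = \rank A -> top_left_sv A U ->
  (r <= \rank (\sum_(t < s) <<row (O t) Ub>>)%MS)%N ->
  (rows_sel U O)^T *m (rows_sel U O) \in unitmx /\ estimate M U O i = col i M.
Proof.
move=> hrM hU hrA hMA hk hUA G2.
have e1 : r = \rank M by rewrite hrM.
have hUbM := colspace hU e1.
have hUA' := colspace hUA hk.
have sMU : (M^T <= U^T)%MS by rewrite hUA'.
have sUbU : (Ub^T <= U^T)%MS by rewrite hUbM.
have rk : k = r by rewrite hk hrA.
case/submxP: sUbU => D hD.
have hUb : Ub = U *m D^T by rewrite -(trmxK Ub) hD trmx_mul trmxK.
set UO := rows_sel U O.
have hUbO : rows_sel Ub O = UO *m D^T.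
  apply/matrixP => t l; rewrite hUb !mxE; apply: eq_bigr => a _; rewrite !mxE //.
have rUO : \rank UO = k.
  apply/eqP; rewrite eqn_leq rank_leq_col /= [X in (X <= _)%N]rk.
  apply: (leq_trans G2); apply: (leq_trans _ (mxrankM_maxl UO D^T)).
  rewrite -hUbO; apply: mxrankS; apply/sumsmx_subP => t _; rewrite genmxE.
  have -> : row (O t) Ub = row t (rows_sel Ub O) by apply/rowP => l; rewrite !mxE.
  exact: row_sub.
have Gu := gram_unit rUO.
split => //.
case/submxP: sMU => E hE.
have hM : M = U *m E^T by rewrite -(trmxK M) hE trmx_mul trmxK.
set c := col i E^T.
have hcol : col i M = U *m c by rewrite /c hM !colE mulmxA.
have hMO : (\col_(t < s) M (O t) i) = UO *m c.
  apply/matrixP => t z; rewrite !ord1 !mxE hM !mxE; apply: eq_bigr => a _; rewrite !mxE //.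
rewrite /estimate -/UO hMO hcol.
by rewrite -!mulmxA (mulmxA UO^T) (mulmxA (invmx _)) mulVmx // mul1mx.
Qed.
End RC2.
Section NM.
Variable R : realType.

Lemma pow_exp (q L : R) d : 0 <= q -> q <= 1 -> L <= q * d%:R -> (1 - q) ^+ d <= expR (- L).
Proof.
move=> q0 q1 hL.
apply: (le_trans (y := expR (- q) ^+ d)).
  apply: lerXn2r; rewrite ?nnegrE ?subr_ge0 ?expR_ge0 //.
  by have := expR_ge1Dx (- q).
rewrite -expRM_natr ler_expR; lra.
Qed.

Lemma exp_lnV (K : R) : 0 < K -> expR (- ln K) = K^-1.
Proof. by move=> K0; rewrite expRN lnK. Qed.

Lemma pmin_gt0 n (p : 'I_n -> R) : (forall i, 0 < p i) -> 0 < pmin p.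
Proof.
move=> hp; rewrite /pmin; elim/big_ind: _ => //.
by move=> x y hx hy; rewrite lt_min hx hy.
Qed.

Lemma pmin_le n (p : 'I_n -> R) i : pmin p <= p i.
Proof. exact: bigmin_le. Qed.

Lemma rownormE m k (U : 'M[R]_(m,k)) i : rownorm2 U i = (row i U *m (row i U)^T) 0 0.
Proof. by rewrite /rownorm2 mxE; apply: eq_bigr => l _; rewrite !mxE expr2. Qed.

Lemma sum_rows N k (U : 'M[R]_(N,k)) : \sum_i (row i U)^T *m row i U = U^T *m U.
Proof.
apply/matrixP => a b; rewrite summxE [RHS]mxE; apply: eq_bigr => i _.
by rewrite mxE big_ord1 !mxE.
Qed.

End NM.
Section FA.
Variable R : realType.
Variables (m n d s : nat) (p : 'I_n -> R).
Hypothesis m0 : (0 < m)%N.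
Hypothesis P1 : \sum_i p i = 1.

Let c := (m%:R^-1 : R) ^+ s.

Lemma cst_one k : ((m%:R^-1 : R) ^+ (k * s)) *+ ((m ^ s) ^ k) = 1.
Proof.
rewrite -mulr_natl -expnM natrX mulnC -exprMn mulfV ?expr1n //.
by rewrite pnatr_eq0 -lt0n.
Qed.

Lemma c_sum : \sum_(O : {ffun 'I_s -> 'I_m}) c = 1.
Proof.
by have := cst_one 1; rewrite mul1n expn1 sumr_const card_ffun !card_ord.
Qed.

Lemma weight_fst (g : {ffun 'I_d -> 'I_n} -> R) :
  \sum_(w : outcome m n d s) weight p w * g w.1 =
  \sum_(f : {ffun 'I_d -> 'I_n}) (\prod_j p (f j)) * g f.
Proof.
rewrite /weight -(pair_bigA _ (fun (w1 : {ffun 'I_d -> 'I_n}) (w2 : {ffun 'I_n -> {ffun 'I_s -> 'I_m}}) =>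
   (\prod_j p (w1 j)) * (m%:R^-1) ^+ (n * s) * g w1)) /=.
apply: eq_bigr => f _; rewrite sumr_const !card_ffun !card_ord.
by rewrite mulrAC -mulrnAr cst_one mulr1.
Qed.

Lemma weight_snd (i : 'I_n) (g : {ffun 'I_s -> 'I_m} -> R) :
  \sum_(w : outcome m n d s) weight p w * g (w.2 i) =
  \sum_(O : {ffun 'I_s -> 'I_m}) c * g O.
Proof.
rewrite /weight -(pair_bigA _ (fun (w1 : {ffun 'I_d -> 'I_n}) (w2 : {ffun 'I_n -> {ffun 'I_s -> 'I_m}}) =>
   (\prod_j p (w1 j)) * (m%:R^-1) ^+ (n * s) * g (w2 i))) /=.
under eq_bigr => w1 _ do rewrite -mulr_sumr.
rewrite -mulr_suml.
rewrite -mulr_suml.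
have -> : \sum_(w1 : {ffun 'I_d -> 'I_n}) \prod_j p (w1 j) = 1.
  by rewrite -(bigA_distr_bigA (fun (_ : 'I_d) k => p k)) /= P1 big1.
rewrite mul1r mulr_sumr.
pose F (i' : 'I_n) (O : {ffun 'I_s -> 'I_m}) := if i' == i then c * g O else c.
have hF : forall w2 : {ffun 'I_n -> {ffun 'I_s -> 'I_m}},
    (m%:R^-1) ^+ (n * s) * g (w2 i) = \prod_i' F i' (w2 i').
  move=> w2; rewrite (bigD1 i) //= /F eqxx.
  rewrite (eq_bigr (fun _ => c)); last by move=> j /negPf ->.
  have -> : (m%:R^-1 : R) ^+ (n * s) = \prod_(i' : 'I_n) c.
    by rewrite prodr_const card_ord /c -exprM mulnC.
  rewrite (bigD1 i) //=; ring.
rewrite (eq_bigr _ (fun w2 _ => hF w2)).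
rewrite -(bigA_distr_bigA F) /= (bigD1 i) //= /F eqxx.
rewrite [X in _ * X]big1 ?mulr1 // => j /negPf ->; exact: c_sum.
Qed.

End FA.
Section AS.
Variable R : realType.

Lemma prob_lower m n d s (p : 'I_n -> R) (E : outcome m n d s -> Prop)
  (b1 : pred {ffun 'I_d -> 'I_n}) (b2 : pred {ffun 'I_s -> 'I_m}) :
  (0 < m)%N -> (forall i, 0 <= p i) -> \sum_i p i = 1 ->
  (forall w : outcome m n d s, ~~ b1 w.1 -> (forall i, ~~ b2 (w.2 i)) -> E w) ->
  1 - (\sum_(f : {ffun 'I_d -> 'I_n}) (\prod_j p (f j)) * (if b1 f then 1 else 0)
       + n%:R * \sum_(O : {ffun 'I_s -> 'I_m}) (m%:R^-1)^+s * (if b2 O then 1 else 0))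
  <= Prob p E.
Proof.
move=> m0 p0 P1 hE.
pose i1 (f : {ffun 'I_d -> 'I_n}) : R := if b1 f then 1 else 0.
pose i2 (O : {ffun 'I_s -> 'I_m}) : R := if b2 O then 1 else 0.
have wt0 : forall w : outcome m n d s, 0 <= weight p w.
  move=> w; rewrite /weight mulr_ge0 ?exprn_ge0 ?invr_ge0 ?ler0n //.
  exact: prodr_ge0.
have tot : \sum_(w : outcome m n d s) weight p w = 1.
  have := weight_fst s p m0 (fun _ => 1); rewrite /= => H.
  under eq_bigr do rewrite -[weight _ _]mulr1.
  rewrite H; under eq_bigr do rewrite mulr1.
  by rewrite -(bigA_distr_bigA (fun (_ : 'I_d) k => p k)) /= P1 big1.
have B1 := weight_fst s p m0 i1.
have B2 : forall i, \sum_(w : outcome m n d s) weight p w * i2 (w.2 i) =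
    \sum_(O : {ffun 'I_s -> 'I_m}) (m%:R^-1)^+s * i2 O.
  move=> i; exact: (weight_snd d m0 P1 i i2).
have i10 : forall f, 0 <= i1 f by move=> f; rewrite /i1; case: ifP.
have i20 : forall O, 0 <= i2 O by move=> O; rewrite /i2; case: ifP.
apply: (le_trans (y := \sum_(w : outcome m n d s)
   weight p w * (1 - i1 w.1 - \sum_i i2 (w.2 i)))).
  rewrite (eq_bigr (fun w => weight p w - weight p w * i1 w.1 -
             \sum_i weight p w * i2 (w.2 i))); last first.
    by move=> w _; rewrite !mulrBr mulr1 mulr_sumr.
  rewrite !sumrB tot B1 (exchange_big) /=.
  rewrite (eq_bigr _ (fun i _ => B2 i)) sumr_const card_ord -mulr_natl.
  by rewrite /i1 /i2 opprD addrA mulr1 mulr_natl.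
apply: ler_sum => w _.
case: asboolP => hw.
  have : 0 <= \sum_i i2 (w.2 i) by apply: sumr_ge0.
  have := i10 w.1; have := wt0 w; nra.
suff : 1 <= i1 w.1 + \sum_i i2 (w.2 i).
  have := wt0 w; nra.
case hb1 : (b1 w.1).
  have : 0 <= \sum_i i2 (w.2 i) by apply: sumr_ge0.
  rewrite /i1 hb1; lra.
have [i hi|hall] := pickP (fun i => b2 (w.2 i)).
  rewrite (bigD1 i) //= {1}/i2 hi.
  have : 0 <= \sum_(j | j != i) i2 (w.2 j) by apply: sumr_ge0.
  have := i10 w.1; lra.
exfalso; apply: hw; apply: hE; first by rewrite hb1.
by move=> i; rewrite hall.
Qed.

End AS.
Section MN.
Variable R : realType.

Lemma recover_w m n r d s (M : 'M[R]_(m,n)) (p : 'I_n -> R) (Ub : 'M[R]_(m,r))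
  (Vb : 'M[R]_(n,r)) (w : outcome m n d s) :
  \rank M = r -> (forall i, 0 < p i) -> top_left_sv M Ub -> top_left_sv M^T Vb ->
  ~~ (\rank ((0%R : 'M[R]_r) + \sum_(j < d) <<row (w.1 j) Vb>>)%MS < r)%N ->
  (forall i, ~~ (\rank ((0%R : 'M[R]_r) + \sum_(t < s) <<row (w.2 i t) Ub>>)%MS < r)%N) ->
  mcnus_recovers r M p w.
Proof.
move=> hrM hp hU hV G1 G2.
rewrite adds0mx_id -leqNgt in G1.
have [rA sMA] := recoverA (idx := fun j => w.1 j) hrM hp hV G1.
move=> U hUA i _.
have hk : minn r (\rank (sampledA M p (fun j => w.1 j))) = \rank (sampledA M p (fun j => w.1 j)).
  by rewrite rA minnn.
cbv zeta; apply: (recoverB i hrM hU rA sMA hk hUA).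
by have := G2 i; rewrite adds0mx_id -leqNgt.
Qed.

Lemma q_le1 N r (P : 'I_N -> R) (v : 'I_N -> 'rV[R]_r) (q : R) :
  (0 < r)%N -> (forall i, 0 <= P i) -> \sum_i P i = 1 -> 0 <= q ->
  (forall W : 'M[R]_r, (r - \rank W)%:R * q <= \sum_(i | ~~ (v i <= W)%MS) P i) ->
  q <= 1.
Proof.
move=> r0 P0 P1 q0 H.
have := H 0; rewrite mxrank0 subn0 => h.
have : \sum_(i | ~~ (v i <= (0%R : 'M[R]_r))%MS) P i <= 1.
  rewrite -P1 [X in _ <= X](bigID (fun i => ~~ (v i <= (0%R : 'M[R]_r))%MS)) /= lerDl.
  exact: sumr_ge0.
have : 1 <= r%:R :> R by rewrite ler1n.
nra.
Qed.

End MN.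
Theorem theorem1 (R : realType) (m n r d s : nat) (M : 'M[R]_(m, n))
  (p : 'I_n -> R) (delta : R)
  (Ub : 'M[R]_(m, r)) (Vb : 'M[R]_(n, r)) :
  (m <= n)%N -> (0 < r)%N -> \rank M = r ->
  (forall i, 0 < p i) -> \sum_(i < n) p i = 1 ->
  0 < delta < 1 ->
  top_left_sv M Ub -> top_left_sv M^T Vb ->
  7 * incoherence Ub Vb * r%:R * ln (2 * r%:R / delta) / (n%:R * pmin p) <= d%:R ->
  7 * incoherence Ub Vb * r%:R * ln (2 * r%:R * n%:R / delta) <= s%:R ->
  1 - delta <= Prob (d := d) (s := s) p (mcnus_recovers r M p).
Proof.
move=> hmn r0 hrM hp P1 /andP [dl0 dl1] hU hV hd hs.
have m0 : (0 < m)%N.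
  by apply: (leq_trans r0); rewrite -hrM; exact: rank_leq_row.
have n0 : (0 < n)%N := leq_trans m0 hmn.
have p0 : forall i, 0 <= p i by move=> i; exact: ltW.
have r0R : 0 < r%:R :> R by rewrite ltr0n.
have m0R : 0 < m%:R :> R by rewrite ltr0n.
have n0R : 0 < n%:R :> R by rewrite ltr0n.
have hUU := proj1 hU.
have hVV := proj1 hV.
set mu := incoherence Ub Vb.
have hUr : forall i, m%:R * rownorm2 Ub i <= mu * r%:R.
  move=> i; have h : m%:R / r%:R * rownorm2 Ub i <= mu.
    rewrite /mu /incoherence le_max; apply/orP; left.
    exact: (le_bigmax _ (fun i => m%:R / r%:R * rownorm2 Ub i) i).
  by rewrite mulrAC ler_pdivrMr // in h.
have hVr : forall i, n%:R * rownorm2 Vb i <= mu * r%:R.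
  move=> i; have h : n%:R / r%:R * rownorm2 Vb i <= mu.
    rewrite /mu /incoherence le_max; apply/orP; right.
    exact: (le_bigmax _ (fun i => n%:R / r%:R * rownorm2 Vb i) i).
  by rewrite mulrAC ler_pdivrMr // in h.
have hsU : \sum_i (row i Ub)^T *m row i Ub = 1%:M by rewrite sum_rows.
have hsV : \sum_i (row i Vb)^T *m row i Vb = 1%:M by rewrite sum_rows.
have mu1 : 1 <= mu.
  have tot : \sum_i rownorm2 Ub i = r%:R.
    by rewrite -(sqsum_total hsU); apply: eq_bigr => i _; rewrite rownormE.
  have h : m%:R * \sum_i rownorm2 Ub i <= m%:R * (mu * r%:R).
    rewrite mulr_sumr; apply: (le_trans (ler_sum _ (fun i _ => hUr i))).
    by rewrite sumr_const card_ord mulr_natl.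
  rewrite tot in h.
  have mr0 : 0 < m%:R * r%:R :> R by rewrite mulr_gt0.
  nra.
have mu0 : 0 < mu by lra.
set pm := pmin p.
have pm0 : 0 < pm := pmin_gt0 hp.
have mur0 : 0 < mu * r%:R by rewrite mulr_gt0.
set q1 := n%:R * pm / (mu * r%:R).
have q10 : 0 <= q1 by rewrite /q1 divr_ge0 ?mulr_ge0 // ltW.
have hq1 : forall i, q1 * ((row i Vb) *m (row i Vb)^T) 0 0 <= p i.
  move=> i; rewrite -rownormE; have h := hVr i.
  have ht : n%:R * rownorm2 Vb i / (mu * r%:R) <= 1 by rewrite ler_pdivrMr ?mul1r.
  have -> : q1 * rownorm2 Vb i = pm * (n%:R * rownorm2 Vb i / (mu * r%:R)).
    by rewrite /q1; ring.
  have := pmin_le p i; rewrite -/pm => h2.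
  nra.
have esc1 := escape hsV q10 hq1.
have q11 : q1 <= 1 := q_le1 r0 p0 P1 q10 esc1.
have cov1 := cover p0 P1 q10 q11 (fun W _ => esc1 W) d 0.
rewrite mxrank0 subn0 in cov1.
set L1 := ln (2 * r%:R / delta).
have K10 : 0 < 2 * r%:R / delta by rewrite divr_gt0 // mulr_gt0.
have L10 : 0 <= L1.
  apply: ln_ge0; rewrite ler_pdivlMr // mul1r.
  have : 1 <= r%:R :> R by rewrite ler1n.
  lra.
have hL1 : L1 <= q1 * d%:R.
  have b0 : 0 < n%:R * pm by rewrite mulr_gt0.
  rewrite ler_pdivrMr // in hd.
  rewrite /q1 mulrAC ler_pdivlMr //.
  have : 0 <= mu * r%:R * L1 by rewrite mulr_ge0 // ltW.
  rewrite -/mu -/pm -/L1 in hd.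
  nra.
have e1 : (1 - q1) ^+ d <= delta / (2 * r%:R).
  by apply: (le_trans (pow_exp q10 q11 hL1)); rewrite exp_lnV // invf_div.
set q2 := (mu * r%:R)^-1.
have q20 : 0 <= q2 by rewrite /q2 invr_ge0 ltW.
pose P2 := fun _ : 'I_m => (m%:R^-1 : R).
have P20 : forall l, 0 <= P2 l by move=> l; rewrite /P2 invr_ge0 ltW.
have P21 : \sum_l P2 l = 1.
  by rewrite /P2 sumr_const card_ord -(mulr_natl (m%:R^-1 : R) m) mulfV // gt_eqF.
have hq2 : forall l, q2 * ((row l Ub) *m (row l Ub)^T) 0 0 <= P2 l.
  move=> l; rewrite -rownormE /P2 /q2; have h := hUr l.
  rewrite mulrC ler_pdivrMr // mulrC ler_pdivlMr // mulrC //.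
have esc2 := escape hsU q20 hq2.
have q21 : q2 <= 1 := q_le1 r0 P20 P21 q20 esc2.
have cov2 := cover P20 P21 q20 q21 (fun W _ => esc2 W) s 0.
rewrite mxrank0 subn0 in cov2.
set L2 := ln (2 * r%:R * n%:R / delta).
have K20 : 0 < 2 * r%:R * n%:R / delta by rewrite divr_gt0 // !mulr_gt0.
have L20 : 0 <= L2.
  apply: ln_ge0; rewrite ler_pdivlMr // mul1r.
  have : 1 <= r%:R :> R by rewrite ler1n.
  have : 1 <= n%:R :> R by rewrite ler1n.
  nra.
have hL2 : L2 <= q2 * s%:R.
  rewrite -/mu -/L2 in hs.
  rewrite /q2 mulrC ler_pdivlMr //.
  have : 0 <= mu * r%:R * L2 by rewrite mulr_ge0 // ltW.
  nra.
have e2 : (1 - q2) ^+ s <= delta / (2 * r%:R * n%:R).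
  by apply: (le_trans (pow_exp q20 q21 hL2)); rewrite exp_lnV // invf_div.
have PL := prob_lower (E := mcnus_recovers r M p) (b1 := fun f : {ffun 'I_d -> 'I_n} => (\rank ((0%R : 'M[R]_r) + \sum_(j < d) <<row (f j) Vb>>)%MS < r)%N)
  (b2 := fun O : {ffun 'I_s -> 'I_m} => (\rank ((0%R : 'M[R]_r) + \sum_(t < s) <<row (O t) Ub>>)%MS < r)%N)
  m0 p0 P1 (fun w hb1 hb2 => recover_w hrM hp hU hV hb1 hb2).
apply: (le_trans _ PL).
have cov2' : \sum_(O : {ffun 'I_s -> 'I_m}) (m%:R^-1)^+s *
    (if (\rank ((0%R : 'M[R]_r) + \sum_(t < s) <<row (O t) Ub>>)%MS < r)%N then 1 else 0)
    <= r%:R * (1 - q2) ^+ s.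
  apply: (le_trans _ cov2); rewrite le_eqVlt; apply/orP; left; apply/eqP.
  by apply: eq_bigr => O _; rewrite /P2 prodr_const card_ord.
have cov1' : \sum_(f : {ffun 'I_d -> 'I_n}) (\prod_j p (f j)) *
    (if (\rank ((0%R : 'M[R]_r) + \sum_(j < d) <<row (f j) Vb>>)%MS < r)%N then 1 else 0)
    <= r%:R * (1 - q1) ^+ d.
  exact: cov1.
have f1 : r%:R * (1 - q1) ^+ d <= delta / 2.
  apply: (le_trans (ler_wpM2l (ltW r0R) e1)); rewrite le_eqVlt; apply/orP; left; apply/eqP.
  by field; rewrite gt_eqF.
have f2 : n%:R * (r%:R * (1 - q2) ^+ s) <= delta / 2.
  apply: (le_trans (ler_wpM2l (ltW n0R) (ler_wpM2l (ltW r0R) e2))).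
  rewrite le_eqVlt; apply/orP; left; apply/eqP.
  by field; rewrite !gt_eqF.
have f3 := ler_wpM2l (ltW n0R) cov2'.
lra.
Qed.
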